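(* Let $X$ be a proper geodesic space with basepoint $x_0$. Suppose $p_n,p\in\partial_M X_{x_0}$ and $p_n\to p$ in the topology of $\partial_M X_{x_0}$. Then there exists a Morse gauge $N$ such that $p_n,p\in\partial_M^N X_{x_0}$ for all $n$ and $p_n\to p$ in the topology of $\partial_M^N X_{x_0}$.
   Context: A Morse gauge is a function $N:[1,\infty)\times[0,\infty)\to[0,\infty)$; a geodesic $\gamma$ is $N$-Morse if every $(\lambda,\epsilon)$-quasi-geodesic with endpoints on $\gamma$ lies in the $N(\lambda,\epsilon)$-neighborhood of $\gamma$. $\partial_M X_{x_0}$ is the set of Morse geodesic rays based at $x_0$ modulo finite Hausdorff distance; $\partial_M^N X_{x_0}$ is the subset of classes containing an $N$-Morse ray based at $x_0$, with the quotient of the compact-open topology on the set of $N$-Morse rays based at $x_0$; Morse gauges are ordered pointwise and $\partial_M X_{x_0}=\varinjlim_N\partial_M^N X_{x_0}$ has the direct limit topology ($U$ open iff $U\cap\partial_M^N X_{x_0}$ is open in $\partial_M^N X_{x_0}$ for all $N$). *)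

(* Defs.v *)
From Stdlib Require Import Reals List.
Open Scope R_scope.

Section MorseBoundary.
Variables (X : Type) (d : X -> X -> R).

Definition is_metric : Prop :=
  (forall x y, 0 <= d x y) /\ (forall x y, d x y = 0 <-> x = y) /\
  (forall x y, d x y = d y x) /\ (forall x y z, d x z <= d x y + d y z).

Definition mopen {T : Type} (dist : T -> T -> R) (O : T -> Prop) : Prop :=
  forall x, O x -> exists e, 0 < e /\ forall y, dist x y < e -> O y.

Definition mcompact {T : Type} (dist : T -> T -> R) (K : T -> Prop) : Prop :=
  forall (I : Type) (U : I -> T -> Prop),
    (forall i, mopen dist (U i)) ->
    (forall x, K x -> exists i, U i x) ->
    exists l : list I, forall x, K x -> exists i, In i l /\ U i x.

Definition Rdist (s t : R) : R := Rabs (s - t).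

Definition proper_space : Prop :=
  forall x r, mcompact d (fun y => d x y <= r).

Definition geodesic_space : Prop :=
  forall x y, exists g : R -> X, g 0 = x /\ g (d x y) = y /\
    forall s t, 0 <= s <= d x y -> 0 <= t <= d x y -> d (g s) (g t) = Rabs (s - t).

(** geodesic ray based at x0 (parametrised on [0,oo); values at negative times are irrelevant) *)
Definition geod_ray (x0 : X) (g : R -> X) : Prop :=
  g 0 = x0 /\ forall s t, 0 <= s -> 0 <= t -> d (g s) (g t) = Rabs (s - t).

(** (lam,eps)-quasi-geodesic q : [a,b] -> X (no continuity assumed) *)
Definition quasi_geod (lam eps : R) (q : R -> X) (a b : R) : Prop :=
  forall s t, a <= s <= b -> a <= t <= b ->
    (1 / lam) * Rabs (s - t) - eps <= d (q s) (q t) /\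
    d (q s) (q t) <= lam * Rabs (s - t) + eps.

Definition morse_gauge (N : R -> R -> R) : Prop :=
  forall lam eps, 1 <= lam -> 0 <= eps -> 0 <= N lam eps.

Definition N_morse (N : R -> R -> R) (g : R -> X) : Prop :=
  forall lam eps, 1 <= lam -> 0 <= eps ->
  forall (q : R -> X) (a b : R), a <= b -> quasi_geod lam eps q a b ->
    (exists s, 0 <= s /\ q a = g s) -> (exists s, 0 <= s /\ q b = g s) ->
    forall t, a <= t <= b -> exists s, 0 <= s /\ d (q t) (g s) <= N lam eps.

Definition N_morse_ray (N : R -> R -> R) (x0 : X) (g : R -> X) : Prop :=
  geod_ray x0 g /\ N_morse N g.

Definition morse_ray (x0 : X) (g : R -> X) : Prop :=
  exists N, morse_gauge N /\ N_morse_ray N x0 g.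

Definition ray_equiv (g h : R -> X) : Prop :=
  exists C, (forall s, 0 <= s -> exists t, 0 <= t /\ d (g s) (h t) <= C) /\
            (forall t, 0 <= t -> exists s, 0 <= s /\ d (g s) (h t) <= C).

(** Points of the Morse boundary are represented by Morse rays based at x0;
    sets of boundary points by predicates on rays saturated under ray_equiv. *)
Definition saturated (U : (R -> X) -> Prop) : Prop :=
  forall g h, ray_equiv g h -> U g -> U h.

Definition in_stratum (N : R -> R -> R) (x0 : X) (g : R -> X) : Prop :=
  exists h, N_morse_ray N x0 h /\ ray_equiv g h.

(** compact-open topology on maps [0,oo) -> X: subbasic sets V(K,O) *)
Definition co_subbasic (K : R -> Prop) (O : X -> Prop) : Prop :=
  mcompact Rdist K /\ (forall t, K t -> 0 <= t) /\ mopen d O.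

Definition in_V (K : R -> Prop) (O : X -> Prop) (f : R -> X) : Prop :=
  forall t, K t -> O (f t).

(** finite intersection of subbasic sets, as a list *)
Definition co_basic (B : list ((R -> Prop) * (X -> Prop))) : Prop :=
  forall KO, In KO B -> co_subbasic (fst KO) (snd KO).

Definition in_basic (B : list ((R -> Prop) * (X -> Prop))) (f : R -> X) : Prop :=
  forall KO, In KO B -> in_V (fst KO) (snd KO) f.

(** W ∩ (N-Morse rays at x0) is open in the subspace compact-open topology on the
    set of N-Morse rays based at x0; for saturated W this is exactly openness of
    (the image of) W in the quotient topology of ∂_M^N X_{x0}. *)
Definition stratum_open (N : R -> R -> R) (x0 : X) (W : (R -> X) -> Prop) : Prop :=
  forall g, N_morse_ray N x0 g -> W g ->
    exists B, co_basic B /\ in_basic B g /\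
      forall h, N_morse_ray N x0 h -> in_basic B h -> W h.

(** direct limit topology on ∂_M X_{x0} *)
Definition morse_open (x0 : X) (U : (R -> X) -> Prop) : Prop :=
  forall N, morse_gauge N -> stratum_open N x0 U.

Definition conv_morse (x0 : X) (p : nat -> R -> X) (q : R -> X) : Prop :=
  forall U, saturated U -> morse_open x0 U -> U q ->
    exists n0, forall n, (n0 <= n)%nat -> U (p n).

Definition conv_stratum (N : R -> R -> R) (x0 : X) (p : nat -> R -> X) (q : R -> X) : Prop :=
  forall W, saturated W -> stratum_open N x0 W -> W q ->
    exists n0, forall n, (n0 <= n)%nat -> W (p n).

End MorseBoundary.

(* Main.v *)
Require Import Defs.
From Stdlib Require Import Reals List.
From Stdlib Require Import Lra Lia Classical ClassicalEpsilon.
From Stdlib Require Arith.Cantor.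
Open Scope R_scope.


Lemma d_nonneg {X} (d : X -> X -> R) (Hm : is_metric X d) x y : 0 <= d x y.
Proof. destruct Hm as [H _]. apply H. Qed.
Lemma d_refl {X} (d : X -> X -> R) (Hm : is_metric X d) x : d x x = 0.
Proof. destruct Hm as [_ [H _]]. apply H. reflexivity. Qed.
Lemma d_eq {X} (d : X -> X -> R) (Hm : is_metric X d) x y : d x y = 0 -> x = y.
Proof. destruct Hm as [_ [H _]]. apply H. Qed.
Lemma d_sym {X} (d : X -> X -> R) (Hm : is_metric X d) x y : d x y = d y x.
Proof. destruct Hm as [_ [_ [H _]]]. apply H. Qed.
Lemma d_tri {X} (d : X -> X -> R) (Hm : is_metric X d) x y z : d x z <= d x y + d y z.
Proof. destruct Hm as [_ [_ [_ H]]]. apply H. Qed.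

Lemma ray_dist0 {X} (d : X -> X -> R) x0 g : geod_ray X d x0 g ->
  forall t, 0 <= t -> d x0 (g t) = t.
Proof.
  intros [H0 H] t Ht. rewrite <- H0. rewrite H by lra.
  rewrite Rabs_left1 by lra. lra.
Qed.

Lemma ray_d {X} (d : X -> X -> R) x0 g : geod_ray X d x0 g ->
  forall s t, 0 <= s -> 0 <= t -> d (g s) (g t) = Rabs (s - t).
Proof. intros [_ H]. exact H. Qed.

Lemma req_refl {X} (d : X -> X -> R) (Hm : is_metric X d) g : ray_equiv X d g g.
Proof.
  exists 0. split; intros s Hs; exists s; split; auto; rewrite d_refl; auto; lra.
Qed.

Lemma req_sym {X} (d : X -> X -> R) (Hm : is_metric X d) g h :
  ray_equiv X d g h -> ray_equiv X d h g.
Proof.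
  intros [C [H1 H2]]. exists C. split.
  - intros s Hs. destruct (H2 s Hs) as [t [Ht Hd]]. exists t. split; auto.
    rewrite d_sym; auto.
  - intros t Ht. destruct (H1 t Ht) as [s [Hs Hd]]. exists s. split; auto.
    rewrite d_sym; auto.
Qed.

Lemma req_trans {X} (d : X -> X -> R) (Hm : is_metric X d) g h k :
  ray_equiv X d g h -> ray_equiv X d h k -> ray_equiv X d g k.
Proof.
  intros [C1 [H1 H2]] [C2 [H3 H4]]. exists (C1 + C2). split.
  - intros s Hs. destruct (H1 s Hs) as [t [Ht Hd]].
    destruct (H3 t Ht) as [u [Hu Hd']]. exists u. split; auto.
    pose proof (d_tri d Hm (g s) (h t) (k u)). lra.
  - intros u Hu. destruct (H4 u Hu) as [t [Ht Hd]].
    destruct (H2 t Ht) as [s [Hs Hd']]. exists s. split; auto.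
    pose proof (d_tri d Hm (g s) (h t) (k u)). lra.
Qed.

Definition MP {X} (d : X -> X -> R) (lam eps c : R) (g : R -> X) : Prop :=
  forall (q : R -> X) (a b : R), a <= b -> quasi_geod X d lam eps q a b ->
    (exists s, 0 <= s /\ q a = g s) -> (exists s, 0 <= s /\ q b = g s) ->
    forall t, a <= t <= b -> exists s, 0 <= s /\ d (q t) (g s) <= c.

Lemma MP_c {X} (d : X -> X -> R) lam eps c c' g : c <= c' -> MP d lam eps c g -> MP d lam eps c' g.
Proof.
  intros Hc H q a b Hab Hq Ha Hb t Ht. destruct (H q a b Hab Hq Ha Hb t Ht) as [s [Hs Hd]].
  exists s. split; auto. lra.
Qed.

Lemma qg_eps {X} (d : X -> X -> R) lam eps eps' q a b : eps <= eps' ->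
  quasi_geod X d lam eps q a b -> quasi_geod X d lam eps' q a b.
Proof.
  intros He H s t Hs Ht. destruct (H s t Hs Ht). split; lra.
Qed.

Lemma MP_eps {X} (d : X -> X -> R) lam eps eps' c g : eps' <= eps -> MP d lam eps c g -> MP d lam eps' c g.
Proof.
  intros He H q a b Hab Hq. apply H; auto. eapply qg_eps; eauto.
Qed.

Lemma morse_MP {X} (d : X -> X -> R) N g : N_morse X d N g ->
  forall lam eps, 1 <= lam -> 0 <= eps -> MP d lam eps (N lam eps) g.
Proof. intros H lam eps H1 H2. exact (H lam eps H1 H2). Qed.

Lemma qg_perturb {X} (d : X -> X -> R) (Hm : is_metric X d) lam eps q q' a b D :
  quasi_geod X d lam eps q a b ->
  (forall u, a <= u <= b -> d (q' u) (q u) <= D) ->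
  quasi_geod X d lam (eps + 2 * D) q' a b.
Proof.
  intros H HD s t Hs Ht. destruct (H s t Hs Ht) as [H1 H2].
  pose proof (HD s Hs). pose proof (HD t Ht).
  pose proof (d_tri d Hm (q' s) (q s) (q' t)).
  pose proof (d_tri d Hm (q s) (q t) (q' t)).
  pose proof (d_tri d Hm (q s) (q' s) (q t)).
  pose proof (d_tri d Hm (q' s) (q' t) (q t)).
  rewrite (d_sym d Hm (q t) (q' t)) in *.
  rewrite (d_sym d Hm (q s) (q' s)) in *.
  split; lra.
Qed.

Lemma near_min (f : R -> R) : (forall u, 0 <= f u) ->
  exists tau, 0 <= tau /\ forall u, 0 <= u -> f tau <= f u + 1.
Proof.
  intros Hf. apply NNPP. intro Hn.
  assert (H : forall tau, 0 <= tau -> exists u, 0 <= u /\ f u + 1 < f tau).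
  { intros tau Ht. apply NNPP. intro Hc. apply Hn. exists tau. split; auto.
    intros u Hu. apply Rnot_lt_le. intro Hl. apply Hc. exists u. split; auto. }
  assert (Hk : forall k : nat, exists u, 0 <= u /\ f u <= f 0 - INR k).
  { induction k.
    - exists 0. simpl. split; lra.
    - destruct IHk as [u [Hu Hfu]]. destruct (H u Hu) as [v [Hv Hfv]].
      exists v. split; auto. rewrite S_INR. lra. }
  assert (H1 : 1 > 0) by lra. destruct (INR_archimed 1 (f 0) H1) as [n Hn'].
  destruct (Hk n) as [u [Hu Hfu]]. specialize (Hf u). lra.
Qed.

Lemma fellow {X} (d : X -> X -> R) (Hm : is_metric X d) (Hg : geodesic_space X d)
  x0 N (HN : morse_gauge N) (a b : R -> X)
  (Ha : geod_ray X d x0 a) (HaM : N_morse X d N a) (Hb : geod_ray X d x0 b)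
  (He : ray_equiv X d b a) :
  forall t, 0 <= t -> d (b t) (a t) <= 2 * N 3 1.
Proof.
  intros t Ht.
  destruct He as [C [_ HC]].
  assert (HC0 : 0 <= C).
  { destruct (HC 0 (Rle_refl 0)) as [s [_ Hs]]. pose proof (d_nonneg d Hm (b s) (a 0)). lra. }
  set (s' := t + C + 2).
  set (y := a s').
  destruct (near_min (fun u => d y (b u)) (fun u => d_nonneg d Hm _ _)) as [tau [Htau Hmin]].
  simpl in Hmin.
  destruct (HC s') as [t' [Ht' Hd']]. { unfold s'; lra. }
  pose proof (Hmin t' Ht') as Hm1. rewrite (d_sym d Hm y (b t')) in Hm1. fold y in Hd'.
  pose proof (ray_dist0 d x0 b Hb tau Htau) as Hbt.
  pose proof (ray_dist0 d x0 a Ha s') as Has. fold y in Has.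
  assert (Hs'0 : 0 <= s') by (unfold s'; lra).
  specialize (Has Hs'0).
  pose proof (d_tri d Hm x0 (b tau) y) as Htr.
  rewrite (d_sym d Hm (b tau) y) in Htr.
  assert (Htau_t : t + 1 <= tau) by (unfold s' in *; lra).
  set (L := d (b tau) y).
  destruct (Hg (b tau) y) as [sg [Hs0 [HsL Hsi]]]. fold L in Hs0, HsL, Hsi.
  assert (HL0 : 0 <= L) by apply d_nonneg, Hm.
  set (Q := fun u => if Rle_dec u tau then b u else sg (u - tau)).
  assert (HQ : quasi_geod X d 3 1 Q 0 (tau + L)).
  { intros u v Hu Hv. unfold Q.
    assert (Hcross : forall u v, 0 <= u <= tau -> tau < v <= tau + L ->
       1/3 * Rabs (u - v) - 1 <= d (b u) (sg (v - tau)) /\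
       d (b u) (sg (v - tau)) <= 3 * Rabs (u - v) + 1).
    { clear u v Hu Hv. intros u v Hu Hv.
      set (w := v - tau).
      assert (Hw : 0 <= w <= L) by (unfold w; lra).
      pose proof (Hsi 0 w ltac:(lra) Hw) as H1. rewrite Hs0 in H1.
      rewrite Rabs_left1 in H1 by lra.
      pose proof (ray_d d x0 b Hb u tau ltac:(lra) Htau) as H2.
      rewrite Rabs_left1 in H2 by lra.
      pose proof (Hsi L w ltac:(lra) Hw) as H3. rewrite HsL in H3.
      rewrite Rabs_pos_eq in H3 by lra.
      pose proof (d_tri d Hm (b u) (b tau) (sg w)).
      pose proof (d_tri d Hm (b u) (sg w) (b tau)).
      pose proof (d_tri d Hm y (sg w) (b u)).
      pose proof (Hmin u ltac:(lra)) as H5.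
      rewrite (d_sym d Hm (sg w) (b tau)) in *.
      rewrite (d_sym d Hm (sg w) (b u)) in *.
      rewrite (d_sym d Hm y (b tau)) in H5. fold L in H5.
      rewrite Rabs_left1 by (unfold w in *; lra).
      unfold w in *. split; lra. }
    destruct (Rle_dec u tau), (Rle_dec v tau).
    - rewrite (ray_d d x0 b Hb u v) by lra.
      pose proof (Rabs_pos (u - v)). split; lra.
    - apply Hcross; lra.
    - rewrite (d_sym d Hm (sg (u - tau)) (b v)). rewrite Rabs_minus_sym. apply Hcross; lra.
    - replace (u - v) with ((u - tau) - (v - tau)) by ring.
      rewrite Hsi by lra. pose proof (Rabs_pos (u - tau - (v - tau))). split; lra. }
  assert (HQ0 : exists s, 0 <= s /\ Q 0 = a s).
  { exists 0. split; [lra|]. unfold Q. destruct (Rle_dec 0 tau); [|lra].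
    destruct Ha as [Ha0 _]. destruct Hb as [Hb0 _]. congruence. }
  assert (HQ1 : exists s, 0 <= s /\ Q (tau + L) = a s).
  { exists s'. split; auto. unfold Q. fold y. destruct (Rle_dec (tau + L) tau).
    - assert (L = 0) by lra. replace (tau + L) with tau by lra.
      apply (d_eq d Hm). fold L. auto.
    - replace (tau + L - tau) with L by ring. auto. }
  destruct (HaM 3 1 ltac:(lra) ltac:(lra) Q 0 (tau + L) ltac:(lra) HQ HQ0 HQ1 t ltac:(lra))
    as [u [Hu Hdu]].
  unfold Q in Hdu. destruct (Rle_dec t tau); [|lra].
  pose proof (ray_dist0 d x0 a Ha u Hu).
  pose proof (ray_dist0 d x0 b Hb t Ht).
  pose proof (d_tri d Hm x0 (b t) (a u)).
  pose proof (d_tri d Hm x0 (a u) (b t)).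
  rewrite (d_sym d Hm (a u) (b t)) in *.
  pose proof (ray_d d x0 a Ha u t Hu Ht).
  pose proof (d_tri d Hm (b t) (a u) (a t)).
  assert (Rabs (u - t) <= N 3 1) by (apply Rabs_le; lra).
  lra.
Qed.

Lemma transfer {X} (d : X -> X -> R) (Hm : is_metric X d) (Hg : geodesic_space X d)
  x0 N (HN : morse_gauge N) (a b : R -> X)
  (Ha : geod_ray X d x0 a) (HaM : N_morse X d N a) (Hb : geod_ray X d x0 b)
  (He : ray_equiv X d b a) lam eps (Hl : 1 <= lam) (He0 : 0 <= eps) :
  MP d lam eps (N lam (eps + 2 * (2 * N 3 1)) + 2 * (2 * N 3 1)) b.
Proof.
  set (D := 2 * N 3 1).
  assert (HD : 0 <= D) by (unfold D; pose proof (HN 3 1); lra).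
  pose proof (fellow d Hm Hg x0 N HN a b Ha HaM Hb He) as Hf. fold D in Hf.
  intros q l r Hlr Hq [s1 [Hs1 E1]] [s2 [Hs2 E2]] t Ht.
  set (Q' := fun u => if Req_EM_T u l then a s1 else if Req_EM_T u r then a s2 else q u).
  assert (Hp : forall u, l <= u <= r -> d (Q' u) (q u) <= D).
  { intros u Hu. unfold Q'. destruct (Req_EM_T u l).
    - subst. rewrite E1, d_sym by auto. apply Hf; auto.
    - destruct (Req_EM_T u r).
      + subst. rewrite E2, d_sym by auto. apply Hf; auto.
      + rewrite d_refl by auto. auto. }
  pose proof (qg_perturb d Hm lam eps q Q' l r D Hq Hp) as HQ.
  assert (HQ0 : exists s, 0 <= s /\ Q' l = a s).
  { exists s1. split; auto. unfold Q'. destruct (Req_EM_T l l); congruence. }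
  assert (HQ1 : exists s, 0 <= s /\ Q' r = a s).
  { unfold Q'. destruct (Req_EM_T r l).
    - exists s1. auto.
    - exists s2. split; auto. destruct (Req_EM_T r r); congruence. }
  destruct (HaM lam (eps + 2 * D) Hl ltac:(lra) Q' l r Hlr HQ HQ0 HQ1 t Ht) as [s [Hs Hds]].
  exists s. split; auto.
  pose proof (Hp t Ht). pose proof (Hf s Hs).
  pose proof (d_tri d Hm (q t) (Q' t) (a s)).
  pose proof (d_tri d Hm (q t) (a s) (b s)).
  rewrite (d_sym d Hm (q t) (Q' t)) in *.
  rewrite (d_sym d Hm (a s) (b s)) in *.
  lra.
Qed.

Lemma far {X} (d : X -> X -> R) (Hm : is_metric X d) (g a : R -> X) :
  ~ ray_equiv X d g a -> forall c, exists T, 0 <= T /\ c < d (g T) (a T).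
Proof.
  intros Hn c. apply NNPP. intro Hc. apply Hn. exists c. split.
  - intros s Hs. exists s. split; auto. apply Rnot_lt_le. intro. apply Hc. exists s. auto.
  - intros s Hs. exists s. split; auto. apply Rnot_lt_le. intro. apply Hc. exists s. auto.
Qed.

Definition sing (T : R) : R -> Prop := fun t => t = T.
Definition ball {X} (d : X -> X -> R) (x : X) (r : R) : X -> Prop := fun y => d x y < r.

Lemma ball_open {X} (d : X -> X -> R) (Hm : is_metric X d) x r : mopen d (ball d x r).
Proof.
  intros y Hy. unfold ball in *. exists (r - d x y). split; [lra|].
  intros z Hz. pose proof (d_tri d Hm x y z). lra.
Qed.

Lemma sing_compact T : mcompact Rdist (sing T).
Proof.
  intros I U HU Hc. destruct (Hc T eq_refl) as [i Hi]. exists (i :: nil).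
  intros x Hx. unfold sing in Hx. subst. exists i. split; simpl; auto.
Qed.

Lemma co_sing {X} (d : X -> X -> R) (Hm : is_metric X d) T x r :
  0 <= T -> co_subbasic X d (sing T) (ball d x r).
Proof.
  intros HT. split; [apply sing_compact|]. split.
  - intros t Ht. unfold sing in Ht. subst. auto.
  - apply ball_open; auto.
Qed.

Lemma in_V_sing {X} (d : X -> X -> R) T x r h :
  in_V X (sing T) (ball d x r) h <-> d x (h T) < r.
Proof.
  split.
  - intros H. apply (H T). reflexivity.
  - intros H t Ht. unfold sing in Ht. subst. exact H.
Qed.

Lemma co_basic_map {X} (d : X -> X -> R) (f : nat -> (R -> Prop) * (X -> Prop)) K :
  (forall n, co_subbasic X d (fst (f n)) (snd (f n))) -> co_basic X d (map f (seq 0 K)).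
Proof.
  intros H KO Hin. apply in_map_iff in Hin. destruct Hin as [n [E _]]. subst. apply H.
Qed.

Lemma in_basic_map {X} (f : nat -> (R -> Prop) * (X -> Prop)) K h :
  in_basic X (map f (seq 0 K)) h -> forall n, (n < K)%nat -> in_V X (fst (f n)) (snd (f n)) h.
Proof.
  intros H n Hn. apply H. apply in_map_iff. exists n. split; auto. apply in_seq. lia.
Qed.

Lemma in_basic_map' {X} (f : nat -> (R -> Prop) * (X -> Prop)) K h :
  (forall n, (n < K)%nat -> in_V X (fst (f n)) (snd (f n)) h) -> in_basic X (map f (seq 0 K)) h.
Proof.
  intros H KO Hin. apply in_map_iff in Hin. destruct Hin as [n [E Hn]]. subst.
  apply in_seq in Hn. apply H. lia.
Qed.

Lemma sep {X} (d : X -> X -> R) (Hm : is_metric X d) (Hg : geodesic_space X d)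
  x0 N (HN : morse_gauge N) (a g : R -> X)
  (Ha : geod_ray X d x0 a) (HaM : N_morse X d N a) :
  ~ ray_equiv X d g a ->
  exists T, 0 <= T /\ forall h, geod_ray X d x0 h -> d (g T) (h T) < 1 -> ~ ray_equiv X d h a.
Proof.
  intros Hn. destruct (far d Hm g a Hn (2 * N 3 1 + 1)) as [T [HT Hd]].
  exists T. split; auto. intros h Hh Hgh He.
  pose proof (fellow d Hm Hg x0 N HN a h Ha HaM Hh He T HT).
  pose proof (d_tri d Hm (g T) (h T) (a T)). lra.
Qed.

Lemma least_nat (P : nat -> Prop) : (exists n, P n) -> exists n, P n /\ forall m, (m < n)%nat -> ~ P m.
Proof.
  intros [n Hn]. apply NNPP. intro Hno.
  assert (H : forall k, forall m, (m <= k)%nat -> ~ P m).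
  { induction k; intros m Hm HP.
    - apply Hno. exists m. split; auto. intros m' Hm'. lia.
    - apply Hno. exists m. split; auto. intros m' Hm'. apply IHk. lia. }
  apply (H n n); auto.
Qed.

Lemma choose_fun {A B : Type} (P : A -> B -> Prop) : (forall a, exists b, P a b) ->
  exists f : A -> B, forall a, P a (f a).
Proof.
  intros H. exists (fun a => proj1_sig (constructive_indefinite_description _ (H a))).
  intros a. exact (proj2_sig (constructive_indefinite_description _ (H a))).
Qed.

Definition cN (N : R -> R -> R) lam eps := N lam (eps + 2 * (2 * N 3 1)) + 2 * (2 * N 3 1).

Lemma stratum_MP {X} (d : X -> X -> R) (Hm : is_metric X d) (Hg : geodesic_space X d)
  x0 N (HN : morse_gauge N) g (Hgr : geod_ray X d x0 g) lam eps (Hl : 1 <= lam) (He : 0 <= eps) :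
  in_stratum X d N x0 g -> MP d lam eps (cN N lam eps) g.
Proof.
  intros [h [[Hh HhM] Heq]]. unfold cN.
  apply (transfer d Hm Hg x0 N HN h g Hh HhM Hgr Heq lam eps Hl He).
Qed.

Lemma part1 {X} (d : X -> X -> R) (x0 : X) (Hm : is_metric X d) (Hg : geodesic_space X d)
  (p : nat -> R -> X) (q : R -> X)
  (Hp : forall n, morse_ray X d x0 (p n)) (Hq : morse_ray X d x0 q)
  (Hconv : conv_morse X d x0 p q) :
  forall lam eps, 1 <= lam -> 0 <= eps -> exists c, 0 <= c /\ forall n, MP d lam eps c (p n).
Proof.
  intros lam eps Hl He. apply NNPP. intro Hno.
  assert (Hunb : forall c, exists n, ~ MP d lam eps c (p n)).
  { intros c. apply NNPP. intro Hc. apply Hno. exists (Rmax c 0). split; [apply Rmax_r|].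
    intros n. apply (MP_c d lam eps c); [apply Rmax_l|]. apply NNPP. intro. apply Hc. exists n. auto. }
  assert (Hgr : forall n, geod_ray X d x0 (p n)).
  { intros n. destruct (Hp n) as [N [_ [H _]]]. auto. }
  set (Rec := fun n => forall m, (m < n)%nat -> exists c, MP d lam eps c (p m) /\ ~ MP d lam eps c (p n)).
  assert (Hfin : forall n0, exists C, forall m, (m <= n0)%nat -> MP d lam eps C (p m)).
  { induction n0.
    - destruct (Hp 0%nat) as [N [HN [_ HNM]]]. exists (N lam eps). intros m Hm1.
      replace m with 0%nat by lia. exact (HNM lam eps Hl He).
    - destruct IHn0 as [C HC]. destruct (Hp (S n0)) as [N [HN [_ HNM]]].
      exists (Rmax C (N lam eps)). intros m Hm1. destruct (Nat.eq_dec m (S n0)).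
      + subst. apply (MP_c d lam eps (N lam eps)); [apply Rmax_r|]. exact (HNM lam eps Hl He).
      + apply (MP_c d lam eps C); [apply Rmax_l|]. apply HC. lia. }
  assert (R1 : forall n0, exists n, (n0 <= n)%nat /\ Rec n).
  { intros n0. destruct (Hfin n0) as [C HC]. destruct (least_nat _ (Hunb C)) as [n [Hn Hl']].
    exists n. split.
    - destruct (Compare_dec.le_lt_dec n0 n); auto. exfalso. apply Hn. apply HC. lia.
    - intros m Hmn. exists C. split; auto. apply NNPP. apply Hl'. auto. }
  assert (R2 : forall c, exists K, forall n, Rec n -> MP d lam eps c (p n) -> (n < K)%nat).
  { intros c. apply NNPP. intro Hc.
    assert (Hall : forall m, MP d lam eps c (p m)).
    { intros m. apply NNPP. intro Hm0. apply Hc. exists (S m). intros n Hn HMP.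
      apply NNPP. intro Hnk. assert (Hmn : (m < n)%nat) by lia.
      destruct (Hn m Hmn) as [c' [H1 H2]]. apply Hm0.
      destruct (Rle_lt_dec c' c).
      - apply (MP_c d lam eps c'); auto.
      - exfalso. apply H2. apply (MP_c d lam eps c); auto. lra. }
    destruct (Hunb c) as [n Hn]. auto. }
  destruct Hq as [M [HM [Hqr HqM]]].
  destruct (R2 (cN M lam eps)) as [KM HKM].
  assert (HqU : forall n, Rec n -> (KM <= n)%nat -> ~ ray_equiv X d q (p n)).
  { intros n Hr Hk Heq. assert (n < KM)%nat; [|lia]. apply HKM; auto.
    apply (stratum_MP d Hm Hg x0 M HM (p n) (Hgr n) lam eps Hl He).
    exists q. split; [split; auto|]. apply req_sym; auto. }
  set (U := fun g => forall n, Rec n -> (KM <= n)%nat -> ~ ray_equiv X d g (p n)).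
  assert (Usat : saturated X d U).
  { intros g h Hgh Ug n Hr Hk Heq. apply (Ug n Hr Hk). eapply req_trans; eauto. }
  assert (Uopen : morse_open X d x0 U).
  { intros N' HN' g [Hgr' HgM] Ug.
    destruct (R2 (cN N' lam eps)) as [K' HK'].
    assert (HT : forall n, exists T, 0 <= T /\ (Rec n -> (KM <= n)%nat ->
       forall h, geod_ray X d x0 h -> d (g T) (h T) < 1 -> ~ ray_equiv X d h (p n))).
    { intros n. destruct (classic (Rec n /\ (KM <= n)%nat)) as [[Hr Hk]|Hno'].
      - destruct (Hp n) as [Nn [HNn [Hnr HnM]]].
        destruct (sep d Hm Hg x0 Nn HNn (p n) g Hnr HnM (Ug n Hr Hk)) as [T [HT0 HT]].
        exists T. split; auto.
      - exists 0. split; [lra|]. intros Hr Hk. exfalso. auto. }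
    destruct (choose_fun _ HT) as [Tf HTf].
    set (f := fun n => (sing (Tf n), ball d (g (Tf n)) 1)).
    exists (map f (seq 0 K')). split; [|split].
    - apply co_basic_map. intros n. unfold f; simpl. apply co_sing; auto. apply HTf.
    - apply in_basic_map'. intros n _. unfold f; simpl. apply in_V_sing.
      rewrite d_refl; auto. lra.
    - intros h [Hhr HhM] Hin n Hr Hk Heq.
      destruct (Compare_dec.lt_dec n K') as [Hlt|Hge].
      + pose proof (in_basic_map f K' h Hin n Hlt) as Hv. unfold f in Hv; simpl in Hv.
        apply in_V_sing in Hv. destruct (HTf n) as [_ HH]. apply (HH Hr Hk h Hhr Hv Heq).
      + apply Hge. apply HK'; auto.
        apply (stratum_MP d Hm Hg x0 N' HN' (p n) (Hgr n) lam eps Hl He).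
        exists h. split; [split; auto|]. apply req_sym; auto. }
  destruct (Hconv U Usat Uopen HqU) as [n0 Hn0].
  destruct (R1 (Nat.max n0 KM)) as [n [Hn Hr]].
  apply (Hn0 n ltac:(lia) n Hr ltac:(lia)). apply req_refl; auto.
Qed.

Lemma cluster {X} (d : X -> X -> R) (Hm : is_metric X d) (Hprop : proper_space X d)
  x0 Rr (y : nat -> X) (Hy : forall j, d x0 (y j) <= Rr) :
  exists z, forall eta, 0 < eta -> forall J, exists j, (J <= j)%nat /\ d (y j) z < eta.
Proof.
  apply NNPP. intro Hno.
  assert (H : forall z, exists e : R * nat, 0 < fst e /\ forall j, (snd e <= j)%nat -> fst e <= d (y j) z).
  { intros z. apply NNPP. intro Hz. apply Hno. exists z. intros eta Heta J.
    apply NNPP. intro HJ. apply Hz. exists (eta, J). simpl. split; auto.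
    intros j Hj. apply Rnot_lt_le. intro Hl. apply HJ. exists j. auto. }
  destruct (choose_fun _ H) as [E HE].
  destruct (Hprop x0 Rr X (fun z => ball d z (fst (E z)))) as [l Hl].
  - intros z. apply ball_open; auto.
  - intros w _. exists w. unfold ball. rewrite d_refl; auto. apply HE.
  - assert (HM : exists M, forall z, In z l -> (snd (E z) <= M)%nat).
    { clear Hl. induction l as [|z l IH].
      - exists 0%nat. intros z [].
      - destruct IH as [M HM]. exists (Nat.max M (snd (E z))). intros z' [<-|Hz'].
        + lia.
        + specialize (HM z' Hz'). lia. }
    destruct HM as [M HM].
    destruct (Hl (y M) (Hy M)) as [z [Hz Hb]]. unfold ball in Hb.
    destruct (HE z) as [_ HE2]. specialize (HE2 M (HM z Hz)).
    rewrite d_sym in HE2 by auto. lra.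
Qed.

Definition incr (s : nat -> nat) := forall j, (s j < s (S j))%nat.

Lemma incr_ge s : incr s -> forall j, (j <= s j)%nat.
Proof. intros H j. induction j; [lia|]. specialize (H j). lia. Qed.

Lemma incr_lt s : incr s -> forall m n, (m < n)%nat -> (s m < s n)%nat.
Proof.
  intros H m n Hmn. induction n; [lia|].
  destruct (Nat.eq_dec m n).
  - subst. apply H.
  - specialize (H n). assert (m < n)%nat by lia. specialize (IHn H0). lia.
Qed.

Lemma inv_S_pos j : 0 < / INR (S j).
Proof. apply Rinv_0_lt_compat. apply lt_0_INR. lia. Qed.

Lemma inv_S_le j k : (j <= k)%nat -> / INR (S k) <= / INR (S j).
Proof. intros H. apply Rinv_le_contravar. apply lt_0_INR; lia. apply le_INR. lia. Qed.

Lemma small_inv eta : 0 < eta -> exists n, forall j, (n <= j)%nat -> / INR (S j) < eta.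
Proof.
  intros He. destruct (archimed_cor1 eta He) as [n [Hn Hn0]]. exists n. intros j Hj.
  eapply Rle_lt_trans; [|apply Hn]. apply Rinv_le_contravar. apply lt_0_INR; lia.
  apply le_INR. lia.
Qed.

Lemma extract {X} (d : X -> X -> R) (y : nat -> X) z :
  (forall eta, 0 < eta -> forall J, exists j, (J <= j)%nat /\ d (y j) z < eta) ->
  exists s, incr s /\ forall j, d (y (s j)) z < / INR (S j).
Proof.
  intros H.
  assert (H' : forall Jj : nat * nat, exists j, (fst Jj <= j)%nat /\ d (y j) z < / INR (S (snd Jj))).
  { intros [J j]. apply H. apply inv_S_pos. }
  destruct (choose_fun _ H') as [F HF].
  set (s := fix s j := match j with O => F (0%nat, 0%nat) | S j' => F (S (s j'), S j') end).
  exists s. split.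
  - intros j. simpl. destruct (HF (S (s j), S j)) as [H1 _]. simpl in H1. lia.
  - intros j. destruct j; simpl.
    + apply (HF (0%nat, 0%nat)).
    + apply (HF (S (s j), S j)).
Qed.

Lemma grid delta (Hd : 0 < delta) : forall M : nat, forall t, 0 <= t <= INR M * delta ->
  exists l, (l <= M)%nat /\ Rabs (t - INR l * delta) <= delta.
Proof.
  induction M; intros t Ht.
  - exists 0%nat. split; auto. simpl in *. rewrite Rmult_0_l in *. rewrite Rabs_pos_eq; lra.
  - destruct (Rle_dec t (INR M * delta)).
    + destruct (IHM t) as [l [Hl Hd']]; [lra|]. exists l. split; auto.
    + exists (S M). split; auto. rewrite S_INR in *. apply Rabs_le. lra.
Qed.

Definition tau (i : nat) : R :=
  INR (fst (Cantor.of_nat i)) * / INR (S (snd (Cantor.of_nat i))).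

Lemma tau_pos i : 0 <= tau i.
Proof.
  unfold tau. apply Rmult_le_pos. apply pos_INR. left. apply inv_S_pos.
Qed.

Lemma tau_dense t eta : 0 <= t -> 0 < eta -> exists i, Rabs (tau i - t) < eta.
Proof.
  intros Ht He. destruct (small_inv eta He) as [b Hb].
  set (delta := / INR (S b)).
  assert (Hd : 0 < delta) by apply inv_S_pos.
  destruct (INR_archimed delta t Hd) as [M HM].
  destruct (grid delta Hd M t) as [l [_ Hl]]; [lra|].
  exists (Cantor.to_nat (l, b)). unfold tau. rewrite Cantor.cancel_of_to. simpl fst; simpl snd.
  fold delta. rewrite Rabs_minus_sym. eapply Rle_lt_trans; [apply Hl|]. apply Hb. lia.
Qed.

Lemma zero_of_small x : 0 <= x -> (forall eta, 0 < eta -> x < eta) -> x = 0.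
Proof.
  intros H0 H. destruct (Req_dec x 0); auto. exfalso. specialize (H x). lra.
Qed.

Lemma AA {X} (d : X -> X -> R) (Hm : is_metric X d) (Hprop : proper_space X d)
  x0 (r : nat -> R -> X) (Hr : forall k, geod_ray X d x0 (r k)) :
  exists psi beta, incr psi /\ geod_ray X d x0 beta /\
    forall T eta, 0 < eta -> exists J, forall j, (J <= j)%nat -> forall t, 0 <= t <= T ->
      d (r (psi j) t) (beta t) < eta.
Proof.
  assert (Hst : forall pt : (nat -> nat) * R, exists sz : (nat -> nat) * X,
     0 <= snd pt -> incr (fst sz) /\ forall j, d (r (fst pt (fst sz j)) (snd pt)) (snd sz) < / INR (S j)).
  { intros [phi t]. simpl. destruct (Rle_dec 0 t) as [Ht|Ht].
    - destruct (cluster d Hm Hprop x0 t (fun j => r (phi j) t)) as [z Hz].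
      + intros j. rewrite (ray_dist0 d x0 _ (Hr (phi j)) t Ht). lra.
      + destruct (extract d _ z Hz) as [s [Hs1 Hs2]]. exists (s, z). intros _. auto.
    - exists (fun j => j, x0). intros H. lra. }
  destruct (choose_fun _ Hst) as [St HSt].
  set (Phi := fix Phi i := match i with O => fun j => j
      | S i' => fun j => Phi i' (fst (St (Phi i', tau i')) j) end).
  set (Z := fun i => snd (St (Phi i, tau i))).
  assert (D1 : forall i, incr (Phi i)).
  { induction i.
    - intros j. simpl. lia.
    - intros j. simpl. apply incr_lt; auto.
      destruct (HSt (Phi i, tau i)) as [H1 _]; [apply tau_pos|]. apply H1. }
  assert (D2 : forall l i x, exists k, (x <= k)%nat /\ Phi (l + i)%nat x = Phi i k).
  { induction l; intros i x.
    - exists x. split; auto.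
    - simpl. destruct (IHl i (fst (St (Phi (l + i)%nat, tau (l + i)%nat)) x)) as [k [Hk E]].
      exists k. split; auto.
      destruct (HSt (Phi (l + i)%nat, tau (l + i)%nat)) as [H1 _]; [apply tau_pos|].
      pose proof (incr_ge _ H1 x). simpl in *. lia. }
  assert (D3 : forall i k, d (r (Phi (S i) k) (tau i)) (Z i) < / INR (S k)).
  { intros i k. destruct (HSt (Phi i, tau i)) as [_ H2]; [apply tau_pos|]. apply H2. }
  set (psi := fun j => Phi j j).
  assert (Hpsi : incr psi).
  { intros j. unfold psi. simpl. apply incr_lt; [apply D1|].
    destruct (HSt (Phi j, tau j)) as [H1 _]; [apply tau_pos|].
    pose proof (incr_ge _ H1 (S j)). lia. }
  assert (D4 : forall i j, (S i <= j)%nat -> d (r (psi j) (tau i)) (Z i) < / INR (S j)).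
  { intros i j Hij. unfold psi. destruct (D2 (j - S i)%nat (S i) j) as [k [Hk E]].
    replace (j - S i + S i)%nat with j in E by lia. rewrite E.
    eapply Rlt_le_trans; [apply D3|]. apply inv_S_le; auto. }
  set (s := fun j => r (psi j)).
  assert (Hs : forall j, geod_ray X d x0 (s j)) by (intros; apply Hr).
  assert (Cauchy : forall t, 0 <= t -> forall eta, 0 < eta -> exists J, forall j j',
     (J <= j)%nat -> (J <= j')%nat -> d (s j t) (s j' t) < eta).
  { intros t Ht eta He. destruct (tau_dense t (eta / 4) Ht) as [i Hi]; [lra|].
    destruct (small_inv (eta / 4)) as [n Hn]; [lra|].
    exists (Nat.max n (S i)). intros j j' Hj Hj'.
    pose proof (D4 i j ltac:(lia)). pose proof (D4 i j' ltac:(lia)).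
    pose proof (Hn j ltac:(lia)). pose proof (Hn j' ltac:(lia)).
    pose proof (ray_d d x0 _ (Hs j) t (tau i) Ht (tau_pos i)).
    pose proof (ray_d d x0 _ (Hs j') (tau i) t (tau_pos i) Ht).
    rewrite Rabs_minus_sym in Hi.
    pose proof (d_tri d Hm (s j t) (s j (tau i)) (s j' t)).
    pose proof (d_tri d Hm (s j (tau i)) (Z i) (s j' t)).
    pose proof (d_tri d Hm (Z i) (s j' (tau i)) (s j' t)).
    rewrite (d_sym d Hm (Z i) (s j' (tau i))) in *.
    rewrite Rabs_minus_sym in H4. change (r (psi j) (tau i)) with (s j (tau i)) in H. change (r (psi j') (tau i)) with (s j' (tau i)) in H0. lra. }
  assert (Lim : forall t, exists z, 0 <= t -> forall eta, 0 < eta -> exists J, forall j,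
     (J <= j)%nat -> d (s j t) z < eta).
  { intros t. destruct (Rle_dec 0 t) as [Ht|Ht]; [|exists x0; intros; lra].
    destruct (cluster d Hm Hprop x0 t (fun j => s j t)) as [z Hz].
    { intros j. rewrite (ray_dist0 d x0 _ (Hs j) t Ht). lra. }
    exists z. intros _ eta He. destruct (Cauchy t Ht (eta / 2)) as [J HJ]; [lra|].
    destruct (Hz (eta / 2) ltac:(lra) J) as [j1 [Hj1 Hd1]].
    exists J. intros j Hj. pose proof (HJ j j1 Hj Hj1).
    pose proof (d_tri d Hm (s j t) (s j1 t) z). lra. }
  destruct (choose_fun _ Lim) as [beta Hbeta].
  assert (Hb2 : forall u v, 0 <= u -> 0 <= v -> d (beta u) (beta v) = Rabs (u - v)).
  { intros u v Hu Hv.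
    assert (forall eta, 0 < eta -> Rabs (d (beta u) (beta v) - Rabs (u - v)) < eta).
    { intros eta He. destruct (Hbeta u Hu (eta / 2)) as [J1 H1]; [lra|].
      destruct (Hbeta v Hv (eta / 2)) as [J2 H2]; [lra|].
      set (j := Nat.max J1 J2). specialize (H1 j ltac:(lia)). specialize (H2 j ltac:(lia)).
      pose proof (ray_d d x0 _ (Hs j) u v Hu Hv).
      pose proof (d_tri d Hm (beta u) (s j u) (beta v)).
      pose proof (d_tri d Hm (s j u) (s j v) (beta v)).
      pose proof (d_tri d Hm (s j u) (beta u) (s j v)).
      pose proof (d_tri d Hm (beta u) (beta v) (s j v)).
      pose proof (d_sym d Hm (beta u) (s j u)).
      pose proof (d_sym d Hm (s j v) (beta v)).
      apply Rabs_def1; lra. }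
    assert (Habs : Rabs (d (beta u) (beta v) - Rabs (u - v)) = 0).
    { apply zero_of_small; auto. apply Rabs_pos. }
    destruct (Req_dec (d (beta u) (beta v) - Rabs (u - v)) 0); [lra|].
    exfalso. apply Rabs_no_R0 in H0. auto. }
  assert (Hb0 : beta 0 = x0).
  { symmetry. apply (d_eq d Hm). apply zero_of_small; [apply d_nonneg; auto|].
    intros eta He. destruct (Hbeta 0 (Rle_refl 0) eta He) as [J HJ].
    specialize (HJ J (le_n J)). destruct (Hs J) as [E _]. rewrite E in HJ. auto. }
  exists psi, beta. split; [auto|]. split; [split; auto|].
  intros T eta He.
  set (delta := eta / 4).
  assert (Hd : 0 < delta) by (unfold delta; lra).
  destruct (INR_archimed delta T Hd) as [M HM].
  assert (HJM : forall M', exists J, forall j, (J <= j)%nat -> forall l, (l <= M')%nat ->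
     d (s j (INR l * delta)) (beta (INR l * delta)) < delta).
  { induction M'.
    - destruct (Hbeta (INR 0 * delta)) with (eta := delta) as [J HJ]; auto.
      { simpl. lra. }
      exists J. intros j Hj l Hl. replace l with 0%nat by lia. auto.
    - destruct IHM' as [J1 HJ1].
      destruct (Hbeta (INR (S M') * delta)) with (eta := delta) as [J2 HJ2]; auto.
      { apply Rmult_le_pos; [apply pos_INR|lra]. }
      exists (Nat.max J1 J2). intros j Hj l Hl. destruct (Nat.eq_dec l (S M')).
      + subst. apply HJ2. lia.
      + apply HJ1; lia. }
  destruct (HJM M) as [J HJ]. exists J. intros j Hj t Ht.
  destruct (Rle_dec t (INR M * delta)) as [HtM|HtM]; [|lra].
  destruct (grid delta Hd M t) as [l [Hl Hgl]]; [lra|].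
  assert (Hl0 : 0 <= INR l * delta) by (apply Rmult_le_pos; [apply pos_INR|lra]).
  specialize (HJ j Hj l Hl).
  pose proof (ray_d d x0 _ (Hs j) t (INR l * delta) ltac:(lra) Hl0).
  pose proof (Hb2 (INR l * delta) t Hl0 ltac:(lra)).
  rewrite Rabs_minus_sym in H0.
  pose proof (d_tri d Hm (s j t) (s j (INR l * delta)) (beta t)).
  pose proof (d_tri d Hm (s j (INR l * delta)) (beta (INR l * delta)) (beta t)).
  change (r (psi j) t) with (s j t). unfold delta in *. lra.
Qed.

Lemma limit_MP {X} (d : X -> X -> R) (Hm : is_metric X d) x0 (s : nat -> R -> X) beta
  (Hs : forall k, geod_ray X d x0 (s k))
  (Hcv : forall T eta, 0 < eta -> exists J, forall j, (J <= j)%nat -> forall t, 0 <= t <= T ->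
      d (s j t) (beta t) < eta)
  lam eps c (Hc : 0 <= c) (HMP : forall k, MP d lam (eps + 1) c (s k)) :
  MP d lam eps (c + 1) beta.
Proof.
  intros Q a b Hab HQ [s1 [Hs1 E1]] [s2 [Hs2 E2]] t Ht.
  destruct (Req_EM_T t a) as [Eta|Nta].
  { exists s1. split; auto. subst. rewrite E1, d_refl; auto. lra. }
  destruct (Req_EM_T t b) as [Etb|Ntb].
  { exists s2. split; auto. subst. rewrite E2, d_refl; auto. lra. }
  set (S := Rmax (Rmax s1 s2) (d x0 (Q t) + c + 1)).
  destruct (Hcv S (1/2) ltac:(lra)) as [J HJ].
  specialize (HJ J (le_n J)).
  assert (HS1 : s1 <= S) by (unfold S; eapply Rle_trans; [apply Rmax_l|apply Rmax_l]).
  assert (HS2 : s2 <= S) by (unfold S; eapply Rle_trans; [apply Rmax_r|apply Rmax_l]).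
  assert (HS3 : d x0 (Q t) + c + 1 <= S) by (unfold S; apply Rmax_r).
  set (Q' := fun u => if Req_EM_T u a then s J s1 else if Req_EM_T u b then s J s2 else Q u).
  assert (Hp : forall u, a <= u <= b -> d (Q' u) (Q u) <= 1/2).
  { intros u Hu. unfold Q'. destruct (Req_EM_T u a).
    - subst. rewrite E1. left. apply HJ. lra.
    - destruct (Req_EM_T u b).
      + subst. rewrite E2. left. apply HJ. lra.
      + rewrite d_refl by auto. lra. }
  pose proof (qg_perturb d Hm lam eps Q Q' a b (1/2) HQ Hp) as HQ'.
  replace (eps + 2 * (1/2)) with (eps + 1) in HQ' by field.
  assert (HQ0 : exists sx, 0 <= sx /\ Q' a = s J sx).
  { exists s1. split; auto. unfold Q'. destruct (Req_EM_T a a); congruence. }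
  assert (HQ1 : exists sx, 0 <= sx /\ Q' b = s J sx).
  { unfold Q'. destruct (Req_EM_T b a).
    - exists s1. auto.
    - exists s2. split; auto. destruct (Req_EM_T b b); congruence. }
  destruct (HMP J Q' a b Hab HQ' HQ0 HQ1 t Ht) as [sg [Hsg Hd]].
  unfold Q' in Hd. destruct (Req_EM_T t a); [contradiction|].
  destruct (Req_EM_T t b); [contradiction|].
  exists sg. split; auto.
  pose proof (ray_dist0 d x0 _ (Hs J) sg Hsg).
  pose proof (d_tri d Hm x0 (Q t) (s J sg)).
  assert (Hsg' : d (s J sg) (beta sg) < 1/2) by (apply HJ; lra).
  pose proof (d_tri d Hm (Q t) (s J sg) (beta sg)).
  lra.
Qed.

Lemma lebesgue1 {X} (d : X -> X -> R) (Hm : is_metric X d) x0 beta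
  (Hb : geod_ray X d x0 beta) K O :
  co_subbasic X d K O -> in_V X K O beta ->
  exists eta T, 0 < eta /\ forall h, (forall t, 0 <= t <= T -> d (h t) (beta t) < eta) ->
    in_V X K O h.
Proof.
  intros [HK [HK0 HO]] HV.
  assert (HE : forall t, exists e, 0 < e /\ (K t -> forall y, d (beta t) y < e -> O y)).
  { intros t. destruct (classic (K t)) as [Kt|Kt].
    - destruct (HO (beta t) (HV t Kt)) as [e [He Hy]]. exists e. split; auto.
    - exists 1. split; [lra|]. intros; contradiction. }
  destruct (choose_fun _ HE) as [E HEs].
  destruct (HK R (fun t u => K t /\ Rdist t u < E t / 2)) as [l Hl].
  - intros t u [Kt Hu]. exists (E t / 2 - Rdist t u). split; [lra|].
    intros v Hv. split; auto. unfold Defs.Rdist, Rdist in *.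
    replace (t - v) with ((t - u) + (u - v)) by ring.
    pose proof (Rabs_triang (t - u) (u - v)). lra.
  - intros u Ku. exists u. split; auto. unfold Defs.Rdist, Rdist. rewrite Rminus_diag, Rabs_R0.
    pose proof (proj1 (HEs u)). lra.
  - assert (Hl' : exists eta T, 0 < eta /\ forall t, In t l -> t + E t <= T /\ eta <= E t / 2).
    { clear Hl. induction l as [|t l IH].
      - exists 1, 0. split; [lra|]. intros t [].
      - destruct IH as [eta [T [He HT]]].
        exists (Rmin eta (E t / 2)), (Rmax T (t + E t)). split.
        + apply Rmin_glb_lt; auto. pose proof (proj1 (HEs t)). lra.
        + intros t' [<-|Ht'].
          * split; [apply Rmax_r|apply Rmin_r].
          * destruct (HT t' Ht'). split.
            -- eapply Rle_trans; [eauto|apply Rmax_l].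
            -- eapply Rle_trans; [apply Rmin_l|auto]. }
    destruct Hl' as [eta [T [He HT]]]. exists eta, T. split; auto.
    intros h Hh u Ku. destruct (Hl u Ku) as [t [Hin [Kt Htu]]].
    destruct (HT t Hin) as [HT1 HT2]. unfold Defs.Rdist, Rdist in Htu.
    pose proof (HK0 u Ku). pose proof (HK0 t Kt). pose proof (proj1 (HEs t)).
    apply Rabs_def2 in Htu.
    assert (Hhu : d (h u) (beta u) < eta) by (apply Hh; lra).
    apply (proj2 (HEs t) Kt).
    pose proof (ray_d d x0 beta Hb t u ltac:(lra) ltac:(lra)).
    pose proof (d_tri d Hm (beta t) (beta u) (h u)).
    rewrite (d_sym d Hm (beta u) (h u)) in *.
    assert (Rabs (t - u) < E t / 2) by (apply Rabs_def1; lra).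
    lra.
Qed.

Lemma lebesgue {X} (d : X -> X -> R) (Hm : is_metric X d) x0 beta
  (Hb : geod_ray X d x0 beta) B :
  co_basic X d B -> in_basic X B beta ->
  exists eta T, 0 < eta /\ forall h, (forall t, 0 <= t <= T -> d (h t) (beta t) < eta) ->
    in_basic X B h.
Proof.
  induction B as [|KO B IH]; intros HB HV.
  - exists 1, 0. split; [lra|]. intros h _ KO [].
  - destruct IH as [eta [T [He HT]]].
    { intros KO' H. apply HB. right. auto. }
    { intros KO' H. apply HV. right. auto. }
    destruct (lebesgue1 d Hm x0 beta Hb (fst KO) (snd KO)) as [eta' [T' [He' HT']]].
    { apply HB. left. auto. }
    { apply HV. left. auto. }
    exists (Rmin eta eta'), (Rmax T T'). split; [apply Rmin_glb_lt; auto|].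
    intros h Hh KO' [<-|Hin].
    + apply HT'. intros t Ht. eapply Rlt_le_trans; [apply Hh|apply Rmin_r].
      split; [lra|]. eapply Rle_trans; [apply Ht|apply Rmax_r].
    + apply HT; auto. intros t Ht. eapply Rlt_le_trans; [apply Hh|apply Rmin_l].
      split; [lra|]. eapply Rle_trans; [apply Ht|apply Rmax_l].
Qed.

Theorem lemma5p3 (X : Type) (d : X -> X -> R) (x0 : X)
  (Hmet : is_metric X d) (Hprop : proper_space X d) (Hgeod : geodesic_space X d)
  (p : nat -> R -> X) (q : R -> X)
  (Hp : forall n, morse_ray X d x0 (p n)) (Hq : morse_ray X d x0 q)
  (Hconv : conv_morse X d x0 p q) :
  exists N : R -> R -> R, morse_gauge N /\
    (forall n, in_stratum X d N x0 (p n)) /\ in_stratum X d N x0 q /\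
    conv_stratum X d N x0 p q.
Proof.
  pose proof (part1 d x0 Hmet Hgeod p q Hp Hq Hconv) as HP1.
  assert (Hgr : forall n, geod_ray X d x0 (p n)).
  { intros n. destruct (Hp n) as [N [_ [H _]]]. auto. }
  destruct Hq as [M [HM [Hqr HqM]]].
  assert (HB : forall le : R * R, exists c, 1 <= fst le -> 0 <= snd le ->
     0 <= c /\ forall n, MP d (fst le) (snd le) c (p n)).
  { intros [lam eps]. simpl. destruct (classic (1 <= lam /\ 0 <= eps)) as [[H1 H2]|Hn].
    - destruct (HP1 lam eps H1 H2) as [c Hc]. exists c. auto.
    - exists 0. intros H1 H2. exfalso. auto. }
  destruct (choose_fun _ HB) as [Bnd HBnd].
  set (N := fun lam eps => Rmax (Bnd (lam, eps + 1)) (M lam (eps + 1)) + 1).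
  assert (HBe : forall lam eps, 1 <= lam -> 0 <= eps ->
     0 <= Bnd (lam, eps + 1) /\ forall n, MP d lam (eps + 1) (Bnd (lam, eps + 1)) (p n)).
  { intros lam eps H1 H2. apply (HBnd (lam, eps + 1)); simpl; lra. }
  assert (HN : morse_gauge N).
  { intros lam eps H1 H2. unfold N. destruct (HBe lam eps H1 H2) as [H _].
    pose proof (Rmax_l (Bnd (lam, eps + 1)) (M lam (eps + 1))). lra. }
  assert (HpN : forall n, N_morse X d N (p n)).
  { intros n lam eps H1 H2. apply (MP_c d lam eps (Bnd (lam, eps + 1))).
    - unfold N. pose proof (Rmax_l (Bnd (lam, eps + 1)) (M lam (eps + 1))). lra.
    - apply (MP_eps d lam (eps + 1)); [lra|]. apply HBe; auto. }
  assert (HqN : N_morse X d N q).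
  { intros lam eps H1 H2. apply (MP_c d lam eps (M lam (eps + 1))).
    - unfold N. pose proof (Rmax_r (Bnd (lam, eps + 1)) (M lam (eps + 1))). lra.
    - apply (MP_eps d lam (eps + 1)); [lra|]. exact (HqM lam (eps + 1) ltac:(lra) ltac:(lra)). }
  exists N. split; [auto|]. split; [|split].
  { intros n. exists (p n). split; [split; auto|]. apply req_refl; auto. }
  { exists q. split; [split; auto|]. apply req_refl; auto. }
  intros W Wsat Wopen Wq. apply NNPP. intro Hno.
  assert (Hbad : forall n0, exists n, (n0 <= n)%nat /\ ~ W (p n)).
  { intros n0. apply NNPP. intro Hc. apply Hno. exists n0. intros n Hn.
    apply NNPP. intro. apply Hc. exists n. auto. }
  destruct (choose_fun _ Hbad) as [cf Hcf].
  set (m := fix m j := match j with O => cf 0%nat | S j' => cf (S (m j')) end).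
  assert (Hmi : incr m).
  { intros j. simpl. destruct (Hcf (S (m j))). lia. }
  assert (HmW : forall j, ~ W (p (m j))).
  { intros j. destruct j; simpl; apply Hcf. }
  destruct (AA d Hmet Hprop x0 (fun j => p (m j)) (fun j => Hgr (m j)))
    as [psi [beta [Hpsi [Hbr Hcv]]]].
  set (sk := fun k => p (m (psi k))).
  assert (Hsk : forall k, geod_ray X d x0 (sk k)) by (intros; apply Hgr).
  assert (HskN : forall k, N_morse X d N (sk k)) by (intros; apply HpN).
  assert (HskW : forall k, ~ W (sk k)) by (intros; apply HmW).
  assert (Hcv' : forall T eta, 0 < eta -> exists J, forall j, (J <= j)%nat -> forall t, 0 <= t <= T ->
      d (sk j t) (beta t) < eta) by exact Hcv.
  assert (HbN : N_morse X d N beta).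
  { intros lam eps H1 H2. apply (MP_c d lam eps (Bnd (lam, eps + 1) + 1)).
    - unfold N. pose proof (Rmax_l (Bnd (lam, eps + 1)) (M lam (eps + 1))). lra.
    - destruct (HBe lam eps H1 H2) as [Hc0 HMP].
      apply (limit_MP d Hmet x0 sk beta Hsk Hcv' lam eps _ Hc0).
      intros k. apply HMP. }
  set (D := 2 * N 3 1).
  assert (HD : 0 <= D) by (unfold D; pose proof (HN 3 1); lra).
  destruct (classic (ray_equiv X d beta q)) as [Heq|Hneq].
  - assert (Wb : W beta) by (apply (Wsat q beta); [apply req_sym|]; auto).
    destruct (Wopen beta (conj Hbr HbN) Wb) as [B [HB1 [HB2 HB3]]].
    destruct (lebesgue d Hmet x0 beta Hbr B HB1 HB2) as [eta [T [He HT]]].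
    destruct (Hcv' T eta He) as [J HJ].
    apply (HskW J). apply HB3; [split; auto|]. apply HT. intros t Ht. apply HJ; auto.
  - set (U := fun g => ~ ray_equiv X d g beta /\ forall k, ~ ray_equiv X d g (sk k)).
    assert (Usat : saturated X d U).
    { intros g h Hgh [U1 U2]. split.
      - intros H. apply U1. eapply req_trans; eauto.
      - intros k H. apply (U2 k). eapply req_trans; eauto. }
    assert (Uq : U q).
    { split.
      - intros H. apply Hneq. apply req_sym; auto.
      - intros k H. apply (HskW k). apply (Wsat q); auto. }
    assert (Uopen : morse_open X d x0 U).
    { intros N' HN' g [Hg' _] [Ug1 Ug2].
      destruct (far d Hmet g beta Ug1 (D + 2)) as [T0 [HT0 HdT0]].
      destruct (Hcv' T0 1 ltac:(lra)) as [k1 Hk1].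
      assert (HT : forall k, exists T, 0 <= T /\ forall h, geod_ray X d x0 h ->
         d (g T) (h T) < 1 -> ~ ray_equiv X d h (sk k)).
      { intros k. apply (sep d Hmet Hgeod x0 N HN (sk k) g (Hsk k) (HskN k) (Ug2 k)). }
      destruct (choose_fun _ HT) as [Tf HTf].
      set (f := fun k => (sing (Tf k), ball d (g (Tf k)) 1)).
      exists ((sing T0, ball d (g T0) 1) :: map f (seq 0 k1)). split; [|split].
      - intros KO [<-|Hin].
        + apply co_sing; auto.
        + revert KO Hin. apply co_basic_map. intros k. unfold f; simpl.
          apply co_sing; auto. apply HTf.
      - intros KO [<-|Hin].
        + simpl. apply in_V_sing. rewrite d_refl; auto. lra.
        + revert KO Hin. apply in_basic_map'. intros k _. unfold f; simpl.
          apply in_V_sing. rewrite d_refl; auto. lra.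
      - intros h [Hhr _] Hin.
        assert (H0 : d (g T0) (h T0) < 1).
        { apply (proj1 (in_V_sing d T0 (g T0) 1 h)). apply (Hin (sing T0, ball d (g T0) 1)). left. auto. }
        split.
        + intros Hhb.
          pose proof (fellow d Hmet Hgeod x0 N HN beta h Hbr HbN Hhr Hhb T0 HT0). fold D in H.
          pose proof (d_tri d Hmet (g T0) (h T0) (beta T0)). lra.
        + intros k Hhk. destruct (Compare_dec.lt_dec k k1) as [Hlt|Hge].
          * assert (Hin' : in_basic X (map f (seq 0 k1)) h).
            { intros KO HKO. apply Hin. right. auto. }
            pose proof (in_basic_map f k1 h Hin' k Hlt) as Hv. unfold f in Hv; simpl in Hv.
            apply in_V_sing in Hv. destruct (HTf k) as [_ HH]. apply (HH h Hhr Hv Hhk).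
          * pose proof (fellow d Hmet Hgeod x0 N HN (sk k) h (Hsk k) (HskN k) Hhr Hhk T0 HT0).
            fold D in H.
            assert (d (sk k T0) (beta T0) < 1) by (apply Hk1; [lia|lra]).
            pose proof (d_tri d Hmet (g T0) (h T0) (beta T0)).
            pose proof (d_tri d Hmet (h T0) (sk k T0) (beta T0)). lra. }
    destruct (Hconv U Usat Uopen Uq) as [n0 Hn0].
    assert (Hge : (n0 <= m (psi n0))%nat).
    { pose proof (incr_ge _ Hpsi n0). pose proof (incr_ge _ Hmi (psi n0)). lia. }
    destruct (Hn0 _ Hge) as [_ U2]. apply (U2 n0). apply req_refl; auto.
Qed.
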